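(* Let $q\in\mathbb C_p$ with $|1-q|_p<p^{-1/(p-1)}$ ($p$ an odd prime). For $m\in\mathbb Z_+$ and $r\in\mathbb N$ with $m\le r$, $$\binom rm_q q^{\binom m2-rm}=\frac{1}{[m]_q!}\sum_{k=0}^mq^{-rm}S_1(m-1,k;q)(-1)^k[r]_q^{m-k}.$$
   Context: $[x]_q=\frac{1-q^x}{1-q}$; $[m]_q!=[m]_q\cdots[1]_q$, $[0]_q!=1$; $\binom rm_q=\frac{[r]_q!}{[m]_q![r-m]_q!}$. The $q$-Stirling numbers of the first kind are defined by $\prod_{k=1}^N(1+[k]_qz)=\sum_{k\ge0}S_1(N,k;q)z^k$ for $N\ge-1$ (empty product $=1$; $S_1(N,k;q)=0$ for $k>N$; in particular $S_1(-1,0;q)=1$). *)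

(* Defs.v *)
From HB Require Import structures.
From mathcomp Require Import all_boot all_order all_algebra.
From mathcomp Require Import all_classical all_reals.
From mathcomp Require Import exp.
Set Implicit Arguments. Unset Strict Implicit. Unset Printing Implicit Defensive.
Import Order.TTheory GRing.Theory Num.Theory.
Local Open Scope ring_scope.

Definition qint {F : fieldType} (q : F) (x : nat) : F :=
  if q == 1 then x%:R else (1 - q ^+ x) / (1 - q).

Definition qfact {F : fieldType} (q : F) (m : nat) : F :=
  \prod_(1 <= k < m.+1) qint q k.

Definition qbinom {F : fieldType} (q : F) (r m : nat) : F :=
  qfact q r / (qfact q m * qfact q (r - m)).

(* Here N : nat covers N >= 0; the case N = -1
   of the paper is not needed (m >= 1 below gives N = m - 1 >= 0). *)
Definition qStirling1 {F : fieldType} (N k : nat) (q : F) : F :=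
  (\prod_(1 <= j < N.+1) (1 + (qint q j) *: 'X)) `_ k.

Definition padic_abs (R : realType) (F : fieldType) (p : nat) (abs : F -> R) : Prop :=
  [/\ forall x, 0 <= abs x,
      forall x, abs x = 0 <-> x = 0,
      forall x y, abs (x * y) = abs x * abs y,
      forall x y, abs (x + y) <= Num.max (abs x) (abs y)
    & abs p%:R = (p%:R)^-1].

(* Main.v *)
Require Import Defs.
From HB Require Import structures.
From mathcomp Require Import all_boot all_order all_algebra.
From mathcomp Require Import all_classical all_reals.
From mathcomp Require Import exp.
From mathcomp Require Import ring lra zify.
Import Order.TTheory GRing.Theory Num.Theory.
Local Open Scope ring_scope.
Section Abs.
Variables (R : realType) (F : fieldType) (p : nat) (abs : F -> R).
Hypothesis H : padic_abs p abs.
Hypothesis pp : prime p.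

Let ge0 x : 0 <= abs x. Proof. by case: H. Qed.
Let eq0 x : abs x = 0 <-> x = 0. Proof. by case: H. Qed.
Let absM x y : abs (x * y) = abs x * abs y. Proof. by case: H. Qed.
Let ultra x y : abs (x + y) <= Num.max (abs x) (abs y). Proof. by case: H. Qed.
Let absp : abs p%:R = (p%:R)^-1. Proof. by case: H. Qed.

Lemma abs0 : abs 0 = 0. Proof. by apply/eq0. Qed.

Lemma abs1 : abs 1 = 1.
Proof.
have h : abs 1 * abs 1 = abs 1 by rewrite -absM mulr1.
have h1 : abs 1 != 0 by apply/eqP => /eq0/eqP; rewrite oner_eq0.
by apply: (mulIf h1); rewrite h mul1r.
Qed.

Lemma absN1 : abs (-1) = 1.
Proof.
have h : abs (-1) * abs (-1) = 1 by rewrite -absM mulrNN mulr1 abs1.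
have := ge0 (-1); nra.
Qed.

Lemma absN x : abs (- x) = abs x.
Proof. by rewrite -mulN1r absM absN1 mul1r. Qed.

Lemma absX x n : abs (x ^+ n) = abs x ^+ n.
Proof. by elim: n => [|n IH]; rewrite ?expr0 ?abs1 // !exprS absM IH. Qed.

Lemma absD_le x y c : abs x <= c -> abs y <= c -> abs (x + y) <= c.
Proof. move=> hx hy; apply: le_trans (ultra x y) _; by rewrite ge_max hx hy. Qed.

Lemma absD_lt x y c : abs x < c -> abs y < c -> abs (x + y) < c.
Proof. move=> hx hy; apply: le_lt_trans (ultra x y) _; by rewrite gt_max hx hy. Qed.

Lemma abs_sum_le (I : Type) (s : seq I) (f : I -> F) c : 0 <= c ->
  (forall i, abs (f i) <= c) -> abs (\sum_(i <- s) f i) <= c.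
Proof.
move=> c0 hf; elim: s => [|a s IH]; first by rewrite big_nil abs0.
by rewrite big_cons; apply: absD_le.
Qed.

Lemma abs_sum_lt (I : Type) (s : seq I) (f : I -> F) c : 0 < c ->
  (forall i, abs (f i) < c) -> abs (\sum_(i <- s) f i) < c.
Proof.
move=> c0 hf; elim: s => [|a s IH]; first by rewrite big_nil abs0.
by rewrite big_cons; apply: absD_lt.
Qed.

Lemma abs_dom x y : abs y < abs x -> abs (x + y) = abs x.
Proof.
move=> hyx; apply/eqP; rewrite eq_le; apply/andP; split.
  by apply: absD_le => //; apply: ltW.
have := ultra (x + y) (- y); rewrite addrK absN.
rewrite le_max => /orP[//|h]; by move: (lt_le_trans hyx h); rewrite ltxx.
Qed.

Lemma abs_nat n : abs n%:R <= 1.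
Proof.
elim: n => [|n IH]; first by rewrite abs0.
by rewrite -natr1; apply: absD_le => //; rewrite abs1.
Qed.

Lemma p_gt1 : 1 < (p%:R : R).
Proof. by rewrite ltr1n prime_gt1. Qed.

Lemma absp_lt1 : abs p%:R < 1.
Proof. rewrite absp invf_lt1 ?p_gt1 //; exact: lt_trans ltr01 p_gt1. Qed.

Lemma abs_coprime b : (0 < b)%N -> coprime b p -> abs b%:R = 1.
Proof.
move=> b0 cop; have [a _ hd] := Bezoutl p b0.
move: cop; rewrite /coprime => /eqP g1; rewrite g1 in hd.
case/dvdnP: hd => k hk.
have e : (k%:R * b%:R : F) = 1 + a%:R * p%:R by rewrite -natrM -hk natrD natrM.
have h1 : abs (1 + a%:R * p%:R) = 1.
  rewrite abs_dom abs1 //; rewrite absM.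
  apply: le_lt_trans absp_lt1; rewrite ler_piMl ?abs_nat //.
have : abs (k%:R : F) * abs (b%:R : F) = 1 by rewrite -absM e.
have := abs_nat k; have := abs_nat b; have := ge0 (k%:R); have := ge0 (b%:R); nra.
Qed.

Lemma natr_neq0 n : (0 < n)%N -> (n%:R : F) != 0.
Proof.
elim: n {-2}n (leqnn n) => [|N IH] n hn n0; first by move: hn n0; case: n.
have [dv|ndv] := boolP (p %| n)%N.
  have -> : n = (p * (n %/ p))%N by rewrite mulnC divnK.
  rewrite natrM mulf_neq0 //.
    by apply/eqP => /eq0; rewrite absp => /eqP; rewrite invr_eq0 pnatr_eq0 => /eqP p0; move: pp; rewrite p0.
  apply: IH.
    rewrite -ltnS; apply: leq_trans hn; apply: ltn_Pdiv => //; exact: prime_gt1.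
  by rewrite divn_gt0 ?prime_gt0 // dvdn_leq.
have cop : coprime n p by rewrite coprime_sym prime_coprime.
by apply/eqP => /eq0; rewrite abs_coprime // => /eqP; rewrite oner_eq0.
Qed.

Lemma prime_root (l : nat) (y : F) : prime l -> abs y < 1 ->
  abs y ^+ p.-1 < (p%:R)^-1 -> (y + 1) ^+ l = 1 -> y = 0.
Proof.
move=> pl t1 tp; apply: contra_eq => y0.
rewrite exprD1n big_ord_recl /= expr0 bin0 mulr1n.
rewrite -[X in _ != X]addr0 (can_eq (addKr _)).
have -> : \sum_(i < l) y ^+ bump 0 i *+ 'C(l, bump 0 i)
   = y * \sum_(i < l) (y ^+ i * ('C(l, i.+1))%:R).
  rewrite mulr_sumr; apply: eq_bigr => i _.
  by rewrite /bump /= add1n exprS -mulrnAr mulr_natr.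
apply: mulf_neq0 y0 _.
have l0 := prime_gt0 pl; rewrite -(prednK l0) big_ord_recl /= expr0 mul1r bin1.
rewrite (prednK l0).
have t0 := ge0 y.
suff hlt : abs (\sum_(i < l.-1) y ^+ bump 0 i * ('C(l, (bump 0 i).+1))%:R)
           < abs (l%:R : F).
  apply/eqP => e; have := @abs_dom _ _ hlt; rewrite e abs0 => /esym/eq0/eqP.
  by rewrite (negbTE (@natr_neq0 l l0)).
have [lp|lnp] := eqVneq l p.
  rewrite lp absp; apply: abs_sum_lt; first by rewrite invr_gt0 (lt_trans ltr01 p_gt1).
  move=> i; rewrite absM absX /bump /= add1n.
  have hi := ltn_ord i.
  have [hlt|hge] := ltnP i.+2 p.
    case/dvdnP: (@prime_dvd_bin i.+2 p pp hlt) => k hk.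
    rewrite hk natrM absM absp.
    have hk1 := abs_nat k; have hpos : 0 < (p%:R : R)^-1 by rewrite invr_gt0 (lt_trans ltr01 p_gt1).
    have hti : abs y ^+ i.+1 < 1 by rewrite exprn_ilt1.
    rewrite mulrA gtr_pMl //; have := ge0 (k%:R); have := exprn_ge0 i.+1 t0; nra.
  have e : i.+2 = p by move: hi hge; have := prime_gt0 pp; lia.
  rewrite e binn abs1 mulr1.
  have e2 : i.+1 = p.-1 by move: e; lia.
  by rewrite e2.
have -> : abs (l%:R : F) = 1.
  apply: (@abs_coprime l l0); rewrite prime_coprime // dvdn_prime2 //.
apply: abs_sum_lt => // i; rewrite absM absX.
have h1 : abs y ^+ bump 0 i < 1 by rewrite exprn_ilt1.
have h2 := abs_nat 'C(l, (bump 0 i).+1).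
have h3 := exprn_ge0 (bump 0 i) t0.
have h4 := ge0 ('C(l, (bump 0 i).+1))%:R.
nra.
Qed.

Lemma no_root (q : F) : abs (q - 1) < 1 -> abs (q - 1) ^+ p.-1 < (p%:R)^-1 ->
  forall n, (0 < n)%N -> q ^+ n = 1 -> q = 1.
Proof.
move=> u1 up n0 n0pos qn0; apply/eqP/negPn/negP => q1.
have ex : exists n, (0 < n)%N && (q ^+ n == 1) by exists n0; rewrite n0pos qn0 eqxx.
case: (ex_minnP ex) => n /andP[npos /eqP qn] nmin.
have n1 : (1 < n)%N.
  rewrite ltn_neqAle npos andbT; apply/eqP => e; move: qn; rewrite -e expr1 => /eqP.
  by rewrite (negbTE q1).
set l := pdiv n; have pl : prime l := pdiv_prime n1.
have dl : (l %| n)%N := pdiv_dvd n.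
set d := (n %/ l)%N.
have d0 : (0 < d)%N by rewrite divn_gt0 ?prime_gt0 // dvdn_leq // ltnW.
have dn : (d < n)%N by apply: ltn_Pdiv => //; exact: prime_gt1.
have z1 : q ^+ d != 1.
  apply/negP => /eqP h; have := nmin d; rewrite d0 h eqxx => /(_ isT).
  by rewrite leqNgt dn.
have zl : (q ^+ d - 1 + 1) ^+ l = 1 by rewrite subrK -exprM divnK.
have aq : abs q <= 1.
  have -> : q = (q - 1) + 1 by rewrite subrK.
  by apply: absD_le; rewrite ?abs1 // ltW.
have tle : abs (q ^+ d - 1) <= abs (q - 1).
  rewrite subrX1 absM ler_piMr //; apply: abs_sum_le => // i.
  by rewrite absX exprn_ile1.
have := @prime_root l _ pl (le_lt_trans tle u1) _ zl.
move=> /(_ (le_lt_trans (lerXn2r _ (ge0 _) (ge0 _) tle) up)) /eqP.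
by rewrite subr_eq0 (negbTE z1).
Qed.

End Abs.
Lemma qint0 (F : fieldType) (q : F) : qint q 0 = 0.
Proof. by rewrite /qint expr0 subrr mul0r; case: ifP. Qed.

Lemma qfactS (F : fieldType) (q : F) n : qfact q n.+1 = qfact q n * qint q n.+1.
Proof. by rewrite /qfact big_nat_recr. Qed.

Lemma qfact_split (F : fieldType) (q : F) r m : (m <= r)%N ->
  qfact q r = (\prod_(i < m) qint q (r - i)) * qfact q (r - m).
Proof.
elim: m => [|m IH] Hm; first by rewrite big_ord0 mul1r subn0.
rewrite IH ?(ltnW Hm) // big_ord_recr /= -mulrA; congr (_ * _).
have -> : (r - m = (r - m.+1).+1)%N by rewrite subnS prednK // subn_gt0.
by rewrite qfactS mulrC.
Qed.

Lemma qint_sub (F : fieldType) (q : F) r j : (j <= r)%N ->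
  qint q r - qint q j = q ^+ j * qint q (r - j).
Proof.
move=> Hj; rewrite /qint; case: eqP => [->|Hq].
  by rewrite expr1n mul1r natrB.
have h1 : 1 - q != 0 by rewrite subr_eq0 eq_sym; apply/eqP.
have -> : q ^+ r = q ^+ j * q ^+ (r - j) by rewrite -exprD subnKC.
by field.
Qed.

Lemma stirling_sum (F : fieldType) (q x : F) m : x != 0 -> (0 < m)%N ->
  \sum_(0 <= k < m.+1) qStirling1 m.-1 k q * (-1) ^+ k * x ^+ (m - k)
  = \prod_(0 <= j < m) (x - qint q j).
Proof.
move=> x0 m0.
set P := \prod_(1 <= j < m.-1.+1) (1 + qint q j *: 'X : {poly F}).
have szP : (size P <= m.+1)%N.
  rewrite /P prednK //; elim: m m0 {P} => [//|n IH] _.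
  case: n IH => [|n] IH; first by rewrite big_geq // size_poly1.
  rewrite big_nat_recr //=.
  apply: leq_trans (size_mul_leq _ _) _.
  have h2 : (size ((1 + qint q n.+1 *: 'X)%R : {poly F}) <= 2)%N.
    apply: leq_trans (size_polyD _ _) _; rewrite geq_max size_poly1 /=.
    by apply: leq_trans (size_scale_leq _ _) _; rewrite size_polyX.
  have := IH isT; move: h2; set a := size _; set b := size _ => ha hb. rewrite -subn1; lia.
have H1 := horner_coef_wide (- x^-1) szP.
have H2 : P.[- x^-1] = \prod_(1 <= j < m) (1 - qint q j / x).
  rewrite /P prednK // horner_prod; apply: eq_bigr => j _.
  by rewrite hornerD hornerC hornerZ hornerX mulrN mulrC.
rewrite [LHS]big_mkord.
transitivity (x ^+ m * P.[- x^-1]).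
  rewrite H1 mulr_sumr; apply: eq_bigr => [[k Hk]] _ /=.
  rewrite /qStirling1 -/P.
  have -> : x ^+ m = x ^+ (m - k) * x ^+ k by rewrite -exprD subnK.
  rewrite [(- x^-1) ^+ k]exprNn exprVn; field; exact: expf_neq0.
rewrite H2 (big_ltn m0) qint0 subr0.
rewrite -(prednK m0) exprS -mulrA; congr (_ * _).
have -> : x ^+ m.-1 = \prod_(1 <= j < m.-1.+1) x by rewrite prodr_const_nat subn1.
rewrite -big_split /=.
by apply: eq_bigr => j _; field.
Qed.
Lemma algebra_main (F : fieldType) (q : F) (m r : nat) :
  q != 0 -> qfact q (r - m) != 0 -> qint q r != 0 ->
  (0 < m)%N -> (m <= r)%N ->
  qbinom q r m * q ^ ('C(m, 2)%:Z - (r * m)%:Z)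
  = (qfact q m)^-1 *
    \sum_(0 <= k < m.+1)
      q ^- (r * m) * qStirling1 m.-1 k q * (-1) ^+ k * qint q r ^+ (m - k).
Proof.
move=> q0 fr0 x0 m0 hmr.
rewrite (eq_bigr (fun k => q ^- (r * m) * (qStirling1 m.-1 k q * (-1)^+k * qint q r ^+ (m - k)))); last by move=> k _; rewrite !mulrA.
rewrite -mulr_sumr stirling_sum //.
rewrite big_nat_cond (eq_bigr (fun j => q^+j * qint q (r-j))); last first.
  by move=> j /andP[/andP[_ hj] _]; apply: qint_sub; apply: leq_trans hmr; apply: ltnW.
rewrite -big_nat_cond big_split /= prodrXr bin2_sum big_mkord.
rewrite /qbinom (@qfact_split _ q r m hmr) expfzDr // -exprnN -exprnP.
have [->|fm0] := eqVneq (qfact q m) 0.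
  by rewrite mul0r invr0 !(mulr0, mul0r).
field; rewrite fm0 fr0 /=; rewrite ?expf_neq0 //.
Qed.
Lemma qint_neq0 (F : fieldType) (q : F) j :
  (forall n, (0 < n)%N -> (n%:R : F) != 0) ->
  (forall n, (0 < n)%N -> q ^+ n = 1 -> q = 1) ->
  (0 < j)%N -> qint q j != 0.
Proof.
move=> hn hr j0; rewrite /qint; case: ifP => [_|/eqP q1]; first exact: hn.
have h1 : 1 - q != 0 by rewrite subr_eq0 eq_sym; apply/eqP.
rewrite mulf_neq0 ?invr_eq0 //.
rewrite subr_eq0 eq_sym; apply/eqP => e; exact: q1 (hr j j0 e).
Qed.

Lemma qfact_neq0 (F : fieldType) (q : F) n :
  (forall j, (0 < j)%N -> qint q j != 0) -> qfact q n != 0.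
Proof.
move=> h; rewrite /qfact big_nat_cond; apply: (big_ind (fun x : F => x != 0)).
- exact: oner_neq0.
- by move=> a b; apply: mulf_neq0.
by move=> i /andP[/andP[hi _] _]; apply: h.
Qed.

Theorem mainTheorem13 (R : realType) (F : closedFieldType) (p : nat)
    (abs : F -> R) (q : F) (m r : nat) :
  prime p -> odd p ->
  padic_abs p abs ->
  abs (1 - q) < (p%:R : R) `^ (- (p.-1)%:R^-1) ->
  (0 < m)%N -> (m <= r)%N ->
  qbinom q r m * q ^ ('C(m, 2)%:Z - (r * m)%:Z)
  = (qfact q m)^-1 *
    \sum_(0 <= k < m.+1)
      q ^- (r * m) * qStirling1 m.-1 k q * (-1) ^+ k * qint q r ^+ (m - k).
Proof.
move=> pp op H hq m0 hmr.
have uq : abs (1 - q) = abs (q - 1) by rewrite -opprB (@absN _ _ _ _ H).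
rewrite uq in hq.
set u := abs (q - 1) in hq.
set c := (p%:R : R) `^ _ in hq.
have u0 : 0 <= u by rewrite /u; case: H.
have p1 : (1 < p)%N := prime_gt1 pp.
have pR0 : 0 <= (p%:R : R) by [].
have pn0 : (p.-1 != 0)%N by rewrite -lt0n -ltnS prednK // ltnW.
have up : u ^+ p.-1 < (p%:R)^-1.
  have c0 : 0 <= c := powR_ge0 _ _.
  have h : u ^+ p.-1 < c ^+ p.-1 by rewrite ltrXn2r.
  apply: lt_le_trans h _.
  rewrite -powR_mulrn // /c -powRrM mulNr mulVf ?pnatr_eq0 // powR_inv1 //.
have pinv1 : (p%:R : R)^-1 < 1 by rewrite invf_lt1 ?ltr1n // ltr0n ltnW.
have u1 : u < 1.
  rewrite ltNge; apply/negP => hu.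
  have := exprn_ege1 p.-1 hu; move: (lt_trans up pinv1); rewrite ltNge => /negP; done.
have hn := @natr_neq0 _ _ _ _ H pp.
have hr := @no_root _ _ _ _ H pp q u1 up.
have q0 : q != 0.
  apply/eqP => e; move: u1; rewrite /u e sub0r (@absN _ _ _ _ H) (@abs1 _ _ _ _ H) ?ltxx //.
apply: algebra_main => //.
- by apply: qfact_neq0 => j j0; apply: qint_neq0.
- by apply: qint_neq0 => //; apply: leq_trans hmr.
Qed.
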